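(* Let $k\ge3$, let $\{S_n\}$ be a perturbed sequence of weak shifts of degree $d$ corresponding to a uniformly bounded sequence of weak shift-like maps $\{\mathsf S_n\}$ of degree $\tilde d\le d-2$. Then there exists a sufficiently large $R>1$ such that \[U^+=\bigcup_{n\ge1} S(n)^{-1}\bigl(\operatorname{int} V_R^k\bigr)\quad\text{and}\quad U^-=\bigcup_{n\ge1}\bigl(S^{-1}(n)\bigr)^{-1}\bigl(\operatorname{int} V_R^-\bigr).\]
   Context: Let $Q_m(z)=z^m$ and $\mathbf H_d(w_1,\dots,w_{k-1})=\sum_{i=1}^{k-1}w_i^d$. A sequence $\{\mathsf S_n\}$ of maps $\mathsf S_n(z_1,\dots,z_k)=(z_2,\dots,z_k,\ a_nz_1+p_n(z_2,\dots,z_k))$ is a uniformly bounded sequence of weak shift-like maps of degree $\tilde d\ge1$ if each $a_nz_1+p_n$ has degree $\tilde d$, $p_n(\mathbf z)=\sum_{i\in I}\alpha_{i,n}\mathbf z^i$ with $I$ the multi-indices in $\mathbb{N}_0^{k-1}$ of total degree $\le\tilde d$, and there are constants $\tilde m,\tilde M>0$ with $\tilde m<|a_n|<\tilde M$ and $|\alpha_{i,n}|<\tilde M$ for all $n,i$. For $d\ge\tilde d+2$ the associated perturbed sequence of weak shifts of degree $d$ is \[S_n(z)=\mathsf S_n(z)+\bigl(0,\dots,0,Q_{d-1}(z_2),\mathbf H_d(z_2,\dots,z_k)\bigr),\] i.e. $S_n(z)=(z_2,\dots,z_{k-1},z_k+z_2^{d-1},a_nz_1+p_n(z_2,\dots,z_k)+\sum_{i=2}^k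 z_i^d)$; these are polynomial automorphisms of $\mathbb{C}^k$. Write $S(n)=S_n\circ\cdots\circ S_1$ and $S^{-1}(n)=S_n^{-1}\circ\cdots\circ S_1^{-1}$, and $\overline{F}$ for the extension of a polynomial map to $\mathbb{P}^k$, with $z\in\mathbb{C}^k$ identified with $[z:1]$. Let $X^+=[0:\cdots:0:1:0]$ (the $k$-th homogeneous coordinate equal to 1) and $X^-=[1:0:\cdots:0]$. Define $U^+=\{z\in\mathbb{C}^k:\overline{S(n)}([z:1])\to X^+\}$ and $U^-=\{z\in\mathbb{C}^k:\overline{S^{-1}(n)}([z:1])\to X^-\}$. For $R>0$, $V_R^k=\{z:|z_k|\ge\max\{(k-1)|z_1|,\dots,(k-1)|z_{k-1}|,R\}\}$ and $V_R^-=\{z:|z_1|\ge\max\{(k-1)|z_2|,\dots,(k-1)|z_k|,R\}\}$. *)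

(* Defs.v *)
From HB Require Import structures.
From mathcomp Require Import all_boot all_order all_algebra.
From mathcomp Require Import reals.
From mathcomp Require Import complex.
From mathcomp Require Import mpoly.

Set Implicit Arguments.
Unset Strict Implicit.
Unset Printing Implicit Defensive.

Import Order.TTheory GRing.Theory Num.Theory.
Local Open Scope ring_scope.
Local Open Scope complex_scope.

Section WeakShifts.
Variable R : realType.
Local Notation C := (R[i]).
Variable k : nat.

(* A point of C^k is a function 'I_k -> C; coordinate z_{m+1} of the paper
   is [coord z m] (0-indexed); out-of-range indices read as 0 (never used). *)
Definition coord (z : 'I_k -> C) (m : nat) : C :=
  if @insub _ (fun i => i < k)%N _ m is Some i then z i else 0.

Definition tailv (z : 'I_k -> C) : 'I_k.-1 -> C := fun i => coord z i.+1.

(* total degree of a polynomial (0 for the zero polynomial) *)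
Definition mdegree (n : nat) (q : {mpoly C[n]}) : nat := (msize q).-1.

(* the polynomial a z_1 + p(z_2,...,z_k) in the k variables z_1..z_k
   (written in {mpoly C[k.-1.+1]}, which is the ring in k variables for k>=1) *)
Definition shift_last_poly (a : C) (p : {mpoly C[k.-1]}) : {mpoly C[k.-1.+1]} :=
  a *: 'X_ord0 + mmap (fun c : C => c%:MP) (fun i => 'X_(lift ord0 i)) p.

(* the weak shift-like map  sfS(z) = (z_2, ..., z_k, a z_1 + p(z_2..z_k)) *)
Definition shift_like (a : C) (p : {mpoly C[k.-1]}) (z : 'I_k -> C) : 'I_k -> C :=
  fun j => if (j.+1 < k)%N then coord z j.+1
           else a * coord z 0 + p.@[tailv z].

(* the perturbed weak shift of degree d:
   S(z) = sfS(z) + (0, ..., 0, z_2^(d-1), sum_{i=2}^k z_i^d) *)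
Definition weak_shift (d : nat) (a : C) (p : {mpoly C[k.-1]}) (z : 'I_k -> C)
  : 'I_k -> C :=
  fun j => shift_like a p z j
           + (if (j.+2 == k)%N then coord z 1 ^+ d.-1
              else if (j.+1 == k)%N then \sum_(i < k | (0 < i)%N) z i ^+ d
              else 0).

Fixpoint iter_comp (F : nat -> ('I_k -> C) -> ('I_k -> C)) (n : nat)
  (z : 'I_k -> C) : 'I_k -> C :=
  match n with
  | 0 => z
  | n'.+1 => F n'.+1 (iter_comp F n' z)
  end.

Definition homcoord (z : 'I_k -> C) : 'I_k.+1 -> C :=
  fun i => if (i < k)%N then coord z i else 1.

Definition Xplus : 'I_k.+1 -> C := fun i => ((i : nat) == k.-1)%:R.
Definition Xminus : 'I_k.+1 -> C := fun i => ((i : nat) == 0%N)%:R.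

(* convergence in P^k of [v n] to [p] (p a nonzero homogeneous vector):
   in an affine chart {w_j != 0} containing [p], the affine coordinates
   w_i / w_j converge to p_i / p_j. *)
Definition proj_cvg (v : nat -> 'I_k.+1 -> C) (p : 'I_k.+1 -> C) : Prop :=
  exists j, p j != 0 /\
    (exists N, forall n, (N <= n)%N -> v n j != 0) /\
    forall i (e : R), 0 < e -> exists N, forall n, (N <= n)%N ->
      `|v n i / v n j - p i / p j| < e%:C.

Definition interior_Ck (A : ('I_k -> C) -> Prop) (z : 'I_k -> C) : Prop :=
  exists e : R, 0 < e /\
    forall w : 'I_k -> C, (forall i, `|w i - z i| < e%:C) -> A w.

Definition V_k (Rad : R) (z : 'I_k -> C) : Prop :=
  (forall m, (m < k.-1)%N -> (k.-1)%:R * `|coord z m| <= `|coord z k.-1|)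
  /\ Rad%:C <= `|coord z k.-1|.

Definition V_minus (Rad : R) (z : 'I_k -> C) : Prop :=
  (forall m, (0 < m < k)%N -> (k.-1)%:R * `|coord z m| <= `|coord z 0|)
  /\ Rad%:C <= `|coord z 0|.

End WeakShifts.

(* Main.v *)
Require Import Defs.
From HB Require Import structures.
From mathcomp Require Import all_boot all_order all_algebra.
From mathcomp Require Import reals.
From mathcomp Require Import complex.
From mathcomp Require Import mpoly.
From mathcomp Require Import ring lra zify.
Import Order.TTheory GRing.Theory Num.Theory.
Local Open Scope ring_scope.
Local Open Scope complex_scope.
Set Implicit Arguments.
Unset Strict Implicit.
Unset Printing Implicit Defensive.
Local Notation coord := Defs.coord.
Ltac nlia := repeat match goal with
  | H : is_true (@Order.le _ _ _ _) |- _ => clear H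
  | H : is_true (@Order.lt _ _ _ _) |- _ => clear H
  end; lia.
Section NR.
Variable R : realType.
Local Notation C := (R[i]).
Definition nr (x : C) : R := complex.Re `|x|.
Lemma nrE x : `|x| = (nr x)%:C.
Proof. by rewrite /nr normc_def. Qed.
Lemma nr_ge0 x : 0 <= nr x.
Proof. by have := normr_ge0 x; rewrite nrE ler0c. Qed.
Lemma nrM x y : nr (x * y) = nr x * nr y.
Proof. by apply: complexI; rewrite rmorphM -!nrE normrM. Qed.
Lemma nrX x n : nr (x ^+ n) = nr x ^+ n.
Proof. by apply: complexI; rewrite rmorphXn -!nrE normrX. Qed.
Lemma nrD x y : nr (x + y) <= nr x + nr y.
Proof. by rewrite -lecR rmorphD -!nrE ler_normD. Qed.
Lemma nrN x : nr (- x) = nr x.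
Proof. by apply: complexI; rewrite -!nrE normrN. Qed.
Lemma nrV x : nr (x ^-1) = (nr x)^-1.
Proof. by apply: complexI; rewrite -nrE normfV nrE fmorphV. Qed.
Lemma nr_eq0 x : (nr x == 0) = (x == 0).
Proof. rewrite -(normr_eq0 x) nrE; apply/eqP/eqP => [->|] //=; by case. Qed.
Lemma nr0 : nr 0 = 0.
Proof. by apply/eqP; rewrite nr_eq0. Qed.
Lemma nr1 : nr 1 = 1.
Proof. by apply: complexI; rewrite -nrE normr1. Qed.
Lemma nrB x y : nr x - nr y <= nr (x + y).
Proof. have := nrD (x + y) (- y); rewrite addrK nrN; lra. Qed.
Lemma nr_sum (I : Type) (r : seq I) (P : pred I) (F : I -> C) :
  nr (\sum_(i <- r | P i) F i) <= \sum_(i <- r | P i) nr (F i).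
Proof.
elim/big_rec2: _; first by rewrite nr0.
move=> i y1 y2 _ h; apply: le_trans (nrD _ _) _; lra.
Qed.
End NR.

Section Poly.
Variable R : realType.
Local Notation C := (R[i]).
Variable n : nat.

Definition shm (m : 'X_{1..n}) : 'X_{1..n.+1} :=
  (\sum_(i < n) U_(lift ord0 i) *+ m i)%MM.

Lemma shmE m j : shm m (lift ord0 j) = m j.
Proof.
rewrite /shm mnm_sumE (bigD1 j) //= big1 ?addn0.
  by rewrite mulmnE mnm1E eqxx mul1n.
by move=> i ne; rewrite mulmnE mnm1E (inj_eq (@lift_inj _ ord0)) (negbTE ne).
Qed.

Lemma shm0 m : shm m ord0 = 0%N.
Proof.
by rewrite /shm mnm_sumE big1 // => i _; rewrite mulmnE mnm1E eq_sym (negbTE (neq_lift _ _)).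
Qed.

Lemma shm_inj : injective shm.
Proof. by move=> m1 m2 e; apply/mnmP => j; rewrite -!shmE e. Qed.

Lemma mdeg_shm m : mdeg (shm m) = mdeg m.
Proof.
rewrite /shm mdeg_sum mdegE; apply: eq_bigr => i _.
by rewrite mdegMn mdeg1 mul1n.
Qed.

Lemma mmap1_shm m :
  mmap1 (fun i : 'I_n => ('X_(lift ord0 i) : {mpoly C[n.+1]})) m = 'X_[shm m].
Proof.
rewrite /mmap1 /shm.
rewrite (big_morph (fun m => 'X_[m] : {mpoly C[n.+1]}) (@mpolyXD _ _) (@mpolyX0 _ _)).
by apply: eq_bigr => i _; rewrite mpolyXn.
Qed.
End Poly.


Section Poly2.
Variable R : realType.
Local Notation C := (R[i]).

Lemma mcoeff_sum' (n : nat) (I : Type) (r : seq I) (P : pred I) (F : I -> {mpoly C[n]}) m :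
  (\sum_(i <- r | P i) F i)@_m = \sum_(i <- r | P i) (F i)@_m.
Proof. exact: raddf_sum. Qed.

Lemma coef_shift (k : nat) (a : C) (p : {mpoly C[k.-1]}) (m : 'X_{1..k.-1}) :
  (@shift_last_poly R k a p)@_(shm m) = p@_m.
Proof.
rewrite /shift_last_poly mcoeffD mcoeffZ mcoeffX.
have -> : (U_(ord0) == shm m)%MM = false.
  apply/negbTE/eqP => /mnmP /(_ ord0); by rewrite shm0 mnm1E eqxx.
rewrite mulr0 add0r /mmap mcoeff_sum'.
rewrite [in RHS](mpolyE p) mcoeff_sum'; apply: eq_bigr => m' _.
by rewrite mmap1_shm mcoeffCM mcoeffZ !mcoeffX (inj_eq (@shm_inj _)).
Qed.

Lemma msize_p (k dt : nat) (a : C) (p : {mpoly C[k.-1]}) :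
  (1 <= dt)%N -> mdegree (@shift_last_poly R k a p) = dt -> (msize p <= dt.+1)%N.
Proof.
move=> dt1; rewrite /mdegree => hq.
have hs : msize (@shift_last_poly R k a p) = dt.+1.
  by move: hq dt1; case: (msize _) => [|s] /= <-.
rewrite msizeE; apply/bigmax_leqP_seq => m Hm _.
have : shm m \in msupp (@shift_last_poly R k a p).
  by rewrite mcoeff_msupp coef_shift -mcoeff_msupp.
by move/msize_mdeg_lt; rewrite hs mdeg_shm.
Qed.
End Poly2.

Section Eval.
Variable R : realType.
Local Notation C := (R[i]).

Lemma meval_sum' (n : nat) (v : 'I_n -> C) (I : Type) (r : seq I) (P : pred I) (F : I -> {mpoly C[n]}) :
  (\sum_(i <- r | P i) F i).@[v] = \sum_(i <- r | P i) (F i).@[v].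
Proof. exact: raddf_sum. Qed.

Lemma nr_prod (I : Type) (r : seq I) (P : pred I) (F : I -> C) :
  nr (\prod_(i <- r | P i) F i) = \prod_(i <- r | P i) nr (F i).
Proof. exact: (big_morph _ (@nrM R) (@nr1 R)). Qed.

Lemma eval_bound (n b : nat) (Mt rho : R) (p : {mpoly C[n]}) (v : 'I_n -> C) :
  (msize p <= b.+1)%N -> (forall m, nr p@_m <= Mt) -> 1 <= rho ->
  (forall i, nr (v i) <= rho) ->
  nr (p.@[v]) <= #|{: 'X_{1..n < b.+1}}|%:R * Mt * rho ^+ b.
Proof.
move=> hs hc hr hv.
rewrite {1}(mpolywE hs) meval_sum'.
apply: le_trans (nr_sum _ _ _) _.
rewrite -mulrA mulr_natl -sumr_const; apply: ler_sum => m _.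
rewrite mevalZ mevalX nrM nr_prod.
apply: ler_pM; first exact: nr_ge0.
  by apply: prodr_ge0 => i _; rewrite nrX exprn_ge0 // nr_ge0.
  exact: hc.
apply: (@le_trans _ _ (\prod_(i < n) rho ^+ m i)).
  apply: ler_prod => i _; rewrite nrX exprn_ge0 ?nr_ge0 //=.
  by rewrite lerXn2r // ?nnegrE ?nr_ge0 //; lra.
rewrite -(big_morph _ (exprD rho) (expr0 rho)) -mdegE.
apply: ler_weXn2l => //; have := bmdeg m; by [].
Qed.
End Eval.

Section Coord.
Variable R : realType.
Local Notation C := (R[i]).
Variable k : nat.

Lemma coord_lt (z : 'I_k -> C) m (h : (m < k)%N) : coord z m = z (Ordinal h).
Proof. by rewrite /coord (insubT (fun i => i < k)%N h). Qed.

Lemma coord_ge (z : 'I_k -> C) m : (k <= m)%N -> coord z m = 0.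
Proof. by move=> h; rewrite /coord insubF // ltnNge h. Qed.

Lemma coord_ord (z : 'I_k -> C) (i : 'I_k) : coord z i = z i.
Proof. by rewrite (coord_lt z (ltn_ord i)); f_equal; apply: val_inj. Qed.

Variables (d : nat) (a : C) (p : {mpoly C[k.-1]}).

Lemma ws_lt z m : (m.+2 < k)%N -> coord (weak_shift d a p z) m = coord z m.+1.
Proof.
move=> h; have h1 : (m < k)%N by lia.
rewrite (coord_lt _ h1) /weak_shift /shift_like /=.
have -> : (m.+1 < k)%N by lia.
have -> : (m.+2 == k) = false by apply/eqP; lia.
have -> : (m.+1 == k) = false by apply/eqP; lia.
by rewrite addr0.
Qed.

Lemma ws_km2 z : (3 <= k)%N ->
  coord (weak_shift d a p z) k.-2 = coord z k.-1 + coord z 1 ^+ d.-1.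
Proof.
move=> h; have h1 : (k.-2 < k)%N by lia.
rewrite (coord_lt _ h1) /weak_shift /shift_like /=.
have -> : (k.-2.+1 < k)%N by lia.
have -> : (k.-2.+2 == k) by apply/eqP; lia.
by have -> : k.-2.+1 = k.-1 by lia.
Qed.

Lemma ws_last z : (3 <= k)%N ->
  coord (weak_shift d a p z) k.-1 =
  a * coord z 0 + p.@[tailv z] + \sum_(i < k | (0 < i)%N) z i ^+ d.
Proof.
move=> h; have h1 : (k.-1 < k)%N by lia.
rewrite (coord_lt _ h1) /weak_shift /shift_like /=.
have -> : (k.-1.+1 < k)%N = false by lia.
have -> : (k.-1.+2 == k) = false by apply/eqP; lia.
by have -> : (k.-1.+1 == k) by apply/eqP; lia.
Qed.

Lemma sum_split (f : 'I_k -> C) (l : 'I_k) (c : R) : (0 < l)%N -> 0 <= c ->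
  (forall i : 'I_k, (0 < i)%N -> i != l -> nr (f i) <= c) ->
  exists r, \sum_(i < k | (0 < i)%N) f i = f l + r /\ nr r <= (k.-1)%:R * c.
Proof.
move=> l0 c0 hf; exists (\sum_(i < k | (0 < i)%N && (i != l)) f i); split.
  by rewrite (bigD1 l).
apply: le_trans (nr_sum _ _ _) _.
apply: (@le_trans _ _ (\sum_(i < k | (0 < i)%N && (i != l)) c)).
  by apply: ler_sum => i /andP [/hf h /h].
rewrite sumr_const mulrC mulr_natr.
apply: ler_wpMn2l => //.
apply: (@leq_trans #|predC1 l|); last by rewrite cardC1 card_ord.
apply: subset_leq_card; apply/subsetP => i; rewrite !inE => /andP [].
by [].
Qed.
End Coord.

Section Fwd.
Variable R : realType.
Local Notation C := (R[i]).
Variables (k dt d : nat) (Mt : R) (a : C) (p : {mpoly C[k.-1]}).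
Hypotheses (hk : (3 <= k)%N) (hdt : (1 <= dt)%N) (hd : (dt.+2 <= d)%N)
  (ha : nr a <= Mt) (hp : forall m, nr p@_m <= Mt) (hs : (msize p <= dt.+1)%N).

Definition Bc := #|{: 'X_{1..k.-1 < dt.+1}}|%:R * Mt.
Local Notation K := ((k.-1)%:R : R).

Lemma K2 : 2 <= K.
Proof. rewrite -[2]/(2%:R) ler_nat; nlia. Qed.

Lemma Mt0 : 0 <= Mt.
Proof. exact: le_trans (nr_ge0 _) ha. Qed.

Lemma Bc0 : 0 <= Bc.
Proof. by rewrite /Bc mulr_ge0 ?ler0n ?Mt0. Qed.

Lemma fwd_step (z : 'I_k -> C) (R0 : R) :
  1 <= R0 -> 8 * K <= R0 -> 4 * (Mt + Bc) <= R0 ^+ 2 ->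
  R0 <= nr (coord z k.-1) ->
  (forall m, (m < k.-1)%N -> K * nr (coord z m) <= nr (coord z k.-1)) ->
  let w := weak_shift d a p z in
  (forall m, (m < k.-1)%N -> K * nr (coord w m) <= nr (coord w k.-1)) /\
  2 * nr (coord z k.-1) <= nr (coord w k.-1) /\
  (forall m, (m < k.-1)%N -> nr (coord w m) * nr (coord z k.-1) <= 8 * nr (coord w k.-1)).
Proof.
move=> h1 h8 h4 hR hV w.
set rho := nr (coord z k.-1) in hR hV *.
have K2' := K2; have M0 := Mt0; have B0 := Bc0.
have hr1 : 1 <= rho by lra.
have hz : forall m, nr (coord z m) <= rho.
  move=> m; case: (ltnP m k.-1) => hm; first by have := hV m hm; have := nr_ge0 (coord z m); nra.
  case: (ltnP m k) => hm2; first by have -> : m = k.-1 by nlia.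
  by rewrite coord_ge // nr0; lra.
have [d2 [hd2 hdt2]] : exists d2, d = d2.+2 /\ (dt <= d2)%N by exists d.-2; nlia.
set P := rho ^+ d2.
have hP : rho <= P by rewrite /P ler_eXnr //; nlia.
have hw : forall m, (m < k.-1)%N -> nr (coord w m) <= 2 * P * rho.
  move=> m hm; case: (ltnP m.+2 k) => hm2.
    rewrite /w ws_lt //; have := hz m.+1; nra.
  have -> : m = k.-2 by nlia.
  rewrite /w ws_km2 //; apply: le_trans (nrD _ _) _.
  rewrite nrX hd2 /= exprSr -/P.
  have := hz 1; have := hz k.-1; have := nr_ge0 (coord z 1).
  move=> h0 hA hB.
  have : nr (coord z 1) ^+ d2 <= P by rewrite /P lerXn2r // ?nnegrE ?nr_ge0 //; lra.
  nra.
have hl : (0 < k.-1 < k)%N by nlia.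
case/andP: hl => hl0 hlk.
pose l := Ordinal hlk.
have hc0 : 0 <= P * (rho ^+ 2 / (2 * K)).
  by apply: mulr_ge0; [lra | apply: divr_ge0; [apply: exprn_ge0; lra | lra]].
have hterm : forall i : 'I_k, i != l -> nr (z i ^+ d) <= P * (rho ^+ 2 / (2 * K)).
  move=> i hi; have hil : (i < k.-1)%N.
    have := ltn_ord i; move: hi; rewrite -val_eqE /=; nlia.
  have := hV i hil; rewrite coord_ord => hKi.
  have x0 := nr_ge0 (z i).
  have hx : nr (z i) <= rho by have := hz i; rewrite coord_ord.
  rewrite nrX hd2 exprSr exprS.
  have -> : nr (z i) * nr (z i) ^+ d2 * nr (z i) = nr (z i) ^+ d2 * nr (z i) ^+ 2.
    by rewrite expr2; ring.
  apply: ler_pM; [exact: exprn_ge0 | exact: exprn_ge0 | |].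
  - by rewrite /P; apply: lerXn2r; rewrite ?nnegrE //; lra.
  - rewrite ler_pdivlMr; last lra.
    have g1 : (K * nr (z i)) * (K * nr (z i)) <= rho * rho.
      by apply: ler_pM => //; apply: mulr_ge0 => //; lra.
    have g2 : 0 <= K * nr (z i) * nr (z i) by apply: mulr_ge0 => //; apply: mulr_ge0 => //; lra.
    rewrite !expr2; nra.
have [r [hsum hr]] := @sum_split R k (fun i => z i ^+ d) l _ hl0 hc0 (fun i _ hi => hterm i hi).
have eK : K * (P * (rho ^+ 2 / (2 * K))) = P * rho ^+ 2 / 2.
  by field; apply/eqP; lra.
rewrite eK in hr.
have hzl : nr (z l ^+ d) = P * rho ^+ 2.
  by rewrite nrX -(coord_ord z l) /= -/rho hd2 -addn2 exprD.
have hpe : nr (p.@[tailv z]) <= Bc * P.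
  apply: le_trans (eval_bound (rho:=rho) hs hp hr1 _) _.
    by move=> i; rewrite /tailv; apply: hz.
  rewrite /Bc; apply: ler_wpM2l; first by apply: mulr_ge0; rewrite ?ler0n.
  by apply: ler_weXn2l.
have hA : nr (a * coord z 0 + p.@[tailv z]) <= (Mt + Bc) * P.
  apply: le_trans (nrD _ _) _; rewrite nrM.
  have : nr a * nr (coord z 0) <= Mt * P.
    by apply: ler_pM; rewrite ?nr_ge0 //; have := hz 0; lra.
  lra.
have hlast : P * rho ^+ 2 / 4 <= nr (coord w k.-1).
  rewrite /w ws_last // hsum.
  have e1 := nrB (z l ^+ d) r.
  set A := a * coord z 0 + p.@[tailv z].
  have e2 : nr (z l ^+ d + r) - nr A <= nr (A + (z l ^+ d + r)).
    by rewrite [A + _]addrC; exact: nrB.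
  have hP0 : 0 <= P by lra.
  have : (Mt + Bc) * P <= P * rho ^+ 2 / 4.
    have : 4 * (Mt + Bc) <= rho ^+ 2.
      apply: le_trans h4 _; apply: lerXn2r; rewrite ?nnegrE //; lra.
    nra.
  lra.
have hr2 : rho * rho <= P * rho ^+ 2 by rewrite expr2; nra.
split; [|split].
- move=> m hm; have := hw m hm; have := nr_ge0 (coord w m).
  rewrite expr2 in hlast hr2; nra.
- rewrite expr2 in hlast hr2; nra.
- move=> m hm; have := hw m hm; have := nr_ge0 (coord w m).
  rewrite expr2 in hlast hr2; nra.
Qed.

Lemma bwd_step (w z : 'I_k -> C) (R0 : R) :
  0 < Mt -> 2 <= R0 -> 8 * K <= R0 -> 2 * Mt * K <= R0 -> 4 * (1 + Bc) <= R0 ^+ 2 ->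
  weak_shift d a p z = w ->
  R0 <= nr (coord w 0) ->
  (forall m, (0 < m < k)%N -> K * nr (coord w m) <= nr (coord w 0)) ->
  (forall m, (0 < m < k)%N -> K * nr (coord z m) <= nr (coord z 0)) /\
  2 * nr (coord w 0) <= nr (coord z 0) /\
  (forall m, (0 < m < k)%N -> nr (coord z m) * nr (coord w 0) <= 2 * Mt * nr (coord z 0)).
Proof.
move=> hM h2 h8 hMK h4 Hw hR hV.
set rho := nr (coord w 0) in hR hV *.
have K2' := K2; have M0 := Mt0; have B0 := Bc0.
have hw : forall j, nr (coord w j) <= rho.
  move=> j; case: j => [|j]; first by [].
  case: (ltnP j.+1 k) => hj; first by have := hV j.+1 hj; have := nr_ge0 (coord w j.+1); nra.
  by rewrite coord_ge // nr0; lra.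
have hzlt : forall m, (0 < m)%N -> (m.+1 < k)%N -> coord z m = coord w m.-1.
  move=> m h0 h1; rewrite -Hw ws_lt; last by nlia.
  by rewrite prednK.
have hz1 : coord z 1 = coord w 0 by apply: hzlt; nlia.
have hzk : coord z k.-1 = coord w k.-2 - coord w 0 ^+ d.-1.
  by rewrite -Hw ws_km2 // hz1 Hw addrK.
have [d2 [hd2 hdt2]] : exists d2, d = d2.+2 /\ (dt <= d2)%N by exists d.-2; nlia.
set sigma := nr (coord z k.-1).
have hQ : rho * rho <= rho ^+ d.-1.
  rewrite hd2 /= exprSr; apply: ler_wpM2r; first lra.
  by apply: ler_eXnr => //; [nlia | lra].
have hsig : rho ^+ d.-1 - rho <= sigma.
  rewrite /sigma hzk; have := nrB (- coord w 0 ^+ d.-1) (coord w k.-2).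
  rewrite nrN nrX [- _ + _]addrC -/rho; have := hw k.-2; lra.
have hr2 : 2 <= rho by lra.
have hrs : rho <= sigma.
  have : 0 <= rho * (rho - 2) by apply: mulr_ge0; lra.
  lra.
have hzb : forall m, (0 < m < k)%N -> nr (coord z m) <= sigma.
  move=> m /andP [m0 mk]; case: (ltnP m.+1 k) => hm.
    by rewrite hzlt //; have := hw m.-1; lra.
  by have -> : m = k.-1 by nlia.
set S := sigma ^+ d2.
have hs1 : 1 <= sigma by lra.
have hS : sigma <= S by rewrite /S ler_eXnr //; nlia.
have hl : (0 < k.-1 < k)%N by nlia.
case/andP: hl => hl0 hlk.
pose l := Ordinal hlk.
have hc0 : 0 <= rho ^+ d by apply: exprn_ge0; lra.
have hterm : forall i : 'I_k, (0 < i)%N -> i != l -> nr (z i ^+ d) <= rho ^+ d.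
  move=> i i0 hi; have hil : ((i : nat).+1 < k)%N.
    have := ltn_ord i; move: hi; rewrite -val_eqE /=; nlia.
  have hzi : nr (z i) <= rho by rewrite -coord_ord hzlt //; apply: hw.
  rewrite nrX; apply: lerXn2r; rewrite ?nnegrE ?nr_ge0 //; lra.
have [r [hsum hr]] := @sum_split R k (fun i => z i ^+ d) l _ hl0 hc0 hterm.
have hrd : rho ^+ d <= 2 * sigma * sigma.
  have -> : rho ^+ d = rho ^+ d.-1 * rho by rewrite -exprSr hd2.
  apply: ler_pM; [apply: exprn_ge0; lra | lra | lra | lra].
have hzl : nr (z l ^+ d) = S * sigma ^+ 2.
  by rewrite nrX -(coord_ord z l) /= -/sigma hd2 -addn2 exprD.
have hpe : nr (p.@[tailv z]) <= Bc * S.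
  apply: le_trans (eval_bound (rho:=sigma) hs hp hs1 _) _.
    move=> i; rewrite /tailv; apply: hzb; have := ltn_ord i; nlia.
  rewrite /Bc; apply: ler_wpM2l; first by apply: mulr_ge0; rewrite ?ler0n.
  by apply: ler_weXn2l.
have Hlast := ws_last d a p z hk; rewrite Hw hsum in Hlast.
have ez : z l ^+ d = coord w k.-1 + (- (a * coord z 0) + (- p.@[tailv z] + - r)).
  by rewrite Hlast; ring.
have hmain : S * sigma ^+ 2 <= rho + nr a * nr (coord z 0) + Bc * S + K * (2 * sigma * sigma).
  rewrite -hzl ez.
  have t1 := nrD (coord w k.-1) (- (a * coord z 0) + (- p.@[tailv z] + - r)).
  have t2 := nrD (- (a * coord z 0)) (- p.@[tailv z] + - r).
  have t3 := nrD (- p.@[tailv z]) (- r).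
  rewrite !nrN nrM in t2 t3.
  have t4 := hw k.-1.
  have t5 : K * rho ^+ d <= K * (2 * sigma * sigma) by apply: ler_wpM2l; lra.
  lra.
set T := S * sigma ^+ 2 in hzl hmain *.
have hT1 : (1 + Bc) * S <= T / 4.
  have : 4 * (1 + Bc) <= sigma ^+ 2.
    apply: le_trans h4 _; apply: lerXn2r; rewrite ?nnegrE //; lra.
  move=> h; have : (4 * (1 + Bc)) * S <= sigma ^+ 2 * S by apply: ler_wpM2r => //; lra.
  rewrite /T; lra.
have hT2 : K * (2 * sigma * sigma) <= T / 4.
  have : (8 * K) * (sigma * sigma) <= S * (sigma * sigma).
    by apply: ler_wpM2r; [apply: mulr_ge0; lra | lra].
  rewrite /T expr2; lra.
have hs2 : sigma * sigma <= T.
  rewrite /T expr2; have : 1 * (sigma * sigma) <= S * (sigma * sigma).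
    by apply: ler_wpM2r; [apply: mulr_ge0; lra | lra].
  lra.
have hA : T / 2 <= Mt * nr (coord z 0).
  have : nr a * nr (coord z 0) <= Mt * nr (coord z 0).
    by apply: ler_wpM2r; rewrite ?nr_ge0.
  lra.
have hKs : K * sigma <= nr (coord z 0).
  rewrite -(ler_pM2l hM).
  have : (2 * Mt * K) * sigma <= sigma * sigma by apply: ler_wpM2r; lra.
  lra.
split; [|split].
- move=> m hm; apply: le_trans hKs; apply: ler_wpM2l; [lra | exact: hzb].
- have : 2 * sigma <= K * sigma by apply: ler_wpM2r; lra.
  lra.
- move=> m hm; apply: (@le_trans _ _ (sigma * sigma)).
    apply: ler_pM; rewrite ?nr_ge0 //; try lra.
    exact: hzb.
  lra.
Qed.
End Fwd.

Section Gen.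
Variable R : realType.
Local Notation C := (R[i]).

Lemma decay (c : R) (N0 : nat) : 0 <= c -> forall e : R, 0 < e ->
  exists N, forall n, (N <= n)%N -> c / 2 ^+ (n - N0) < e.
Proof.
move=> c0 e e0.
have := @archi_boundP R (c / e); set M := Num.Def.archi_bound _ => hM.
have hM' : c / e < M%:R by apply: hM; apply: divr_ge0 => //; lra.
exists (N0 + M)%N => n hn.
have h2 : (M%:R : R) <= 2 ^+ (n - N0).
  apply: (@le_trans _ _ (2 ^+ M)).
    rewrite -[2]/(2%:R) -natrX ler_nat; apply: ltnW; apply: ltn_expl.
    by [].
  by apply: ler_weXn2l; [lra | nlia].
have hp : 0 < (2 : R) ^+ (n - N0) by apply: exprn_gt0; lra.
rewrite ltr_pdivrMr //.
move: hM'; rewrite ltr_pdivrMr // => h.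
have : M%:R * e <= 2 ^+ (n - N0) * e by apply: ler_wpM2r; lra.
lra.
Qed.

Lemma nr_div (x y : C) : nr (x / y) = nr x / nr y.
Proof. by rewrite nrM nrV. Qed.

Lemma ltC_nr (x : C) (e : R) : (`|x| < e%:C) = (nr x < e).
Proof. by rewrite nrE ltcR. Qed.

Variable k : nat.
Local Notation K := ((k.-1)%:R : R).

Lemma leCK (x y : C) : ((k.-1)%:R * `|x| <= `|y|) = (K * nr x <= nr y).
Proof. by rewrite !nrE -(rmorph_nat (real_complex R)) -rmorphM lecR. Qed.

Lemma uniformN (P : 'I_k.+1 -> nat -> Prop) :
  (forall i, exists N, forall n, (N <= n)%N -> P i n) ->
  exists N, forall i n, (N <= n)%N -> P i n.
Proof.
move=> h.
suff : forall s : seq 'I_k.+1, exists N, forall i n, i \in s -> (N <= n)%N -> P i n.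
  by case/(_ (enum 'I_k.+1)) => N hN; exists N => i n; apply: hN; rewrite mem_enum.
elim=> [|i s [N hN]]; first by exists 0%N.
have [Ni hi] := h i.
exists (maxn N Ni) => j n; rewrite inE => /orP [/eqP -> | hj] hn.
  by apply: hi; apply: leq_trans hn; apply: leq_maxr.
by apply: hN => //; apply: leq_trans hn; apply: leq_maxl.
Qed.

End Gen.

Section Esc.
Variable R : realType.
Local Notation C := (R[i]).

Lemma div_mono (a x y : R) : 0 <= a -> 0 < x -> x <= y -> a / y <= a / x.
Proof.
move=> a0 x0 xy; apply: ler_wpM2l => //.
by rewrite lef_pV2 // posrE; lra.
Qed.

Variable k : nat.
Local Notation K := ((k.-1)%:R : R).

Definition Dom (l : nat) (R0 : R) (x : 'I_k -> C) : Prop :=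
  R0 <= nr (coord x l) /\
  forall m, (m < k)%N -> m != l -> K * nr (coord x m) <= nr (coord x l).

Lemma escape_back (l : nat) (hl : (l < k)%N) (R0 c : R) (sq : nat -> 'I_k -> C)
    (X : 'I_k.+1 -> C) (A : ('I_k -> C) -> Prop) :
  2 <= R0 -> 0 <= c ->
  (forall i, X i = ((i : nat) == l)%:R) ->
  (forall x, A x -> Dom l R0 x) ->
  (forall n, (0 < n)%N -> Dom l R0 (sq n) ->
     Dom l R0 (sq n.+1) /\ 2 * nr (coord (sq n) l) <= nr (coord (sq n.+1) l) /\
     forall m, (m < k)%N -> m != l ->
       nr (coord (sq n.+1) m) * nr (coord (sq n) l) <= c * nr (coord (sq n.+1) l)) ->
  (exists n, (0 < n)%N /\ interior_Ck A (sq n)) ->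
  proj_cvg (fun n => homcoord (sq n)) X.
Proof.
move=> hR0 c0 hX hA hstep [n0 [n0p [e [e0 hAe]]]].
have D0 : Dom l R0 (sq n0).
  by apply: hA; apply: hAe => i; rewrite ltC_nr subrr nr0.
have hind : forall j, Dom l R0 (sq (n0 + j)%N) /\ R0 * 2 ^+ j <= nr (coord (sq (n0 + j)%N) l).
  elim=> [|j [Dj hj]].
    by rewrite addn0 expr0 mulr1; split => //; case: D0.
  have [Dj1 [hj1 _]] := hstep (n0 + j)%N (ltn_addr _ n0p) Dj.
  rewrite addnS; split => //; rewrite exprS.
  have : 0 <= R0 * 2 ^+ j by apply: mulr_ge0; [lra | apply: exprn_ge0; lra].
  lra.
have hpos : forall j, 2 ^+ j <= nr (coord (sq (n0 + j)%N) l).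
  move=> j; have [_ h] := hind j.
  have : 1 * 2 ^+ j <= R0 * 2 ^+ j by apply: ler_wpM2r; [apply: exprn_ge0 | ]; lra.
  lra.
have hpos' : forall j, 0 < nr (coord (sq (n0 + j)%N) l).
  move=> j; apply: lt_le_trans (hpos j); apply: exprn_gt0; lra.
have hrat : forall j m, (m < k)%N -> m != l ->
    nr (coord (sq ((n0 + j)%N).+1) m) * nr (coord (sq (n0 + j)%N) l) <=
    c * nr (coord (sq ((n0 + j)%N).+1) l).
  move=> j m hm hml; have [Dj _] := hind j.
  by have [_ [_ h]] := hstep (n0 + j)%N (ltn_addr _ n0p) Dj; apply: h.
have hgrow : forall j, nr (coord (sq (n0 + j)%N) l) <= nr (coord (sq ((n0 + j)%N).+1) l).
  move=> j; have [Dj _] := hind j.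
  have [_ [h _]] := hstep (n0 + j)%N (ltn_addr _ n0p) Dj.
  have := hpos' j; lra.
have hlk1 : (l < k.+1)%N by nlia.
exists (Ordinal hlk1); split; first by rewrite hX /= eqxx oner_eq0.
split.
  exists n0 => n hn; rewrite /homcoord /= hl.
  rewrite -nr_eq0; have -> : n = (n0 + (n - n0))%N by nlia.
  by have := hpos' (n - n0)%N; lra.
move=> i e' e'0.
have c10 : 0 <= c + 1 by lra.
have [N hN] := decay n0.+1 c10 e'0.
exists (maxn N n0.+1) => n hn.
have hnN : (N <= n)%N by apply: leq_trans hn; apply: leq_maxl.
have hnn : (n0.+1 <= n)%N by apply: leq_trans hn; apply: leq_maxr.
set j := (n - n0.+1)%N.
have hnj : n = ((n0 + j)%N).+1 by rewrite /j; nlia.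
rewrite ltC_nr; apply: le_lt_trans (hN n hnN).
rewrite -/j.
set rj := nr (coord (sq (n0 + j)%N) l).
set rj1 := nr (coord (sq ((n0 + j)%N).+1) l).
have hrj := hpos' j; have hrj1 : 0 < rj1 by have := hgrow j; rewrite -/rj -/rj1; lra.
apply: (@le_trans _ _ ((c + 1) / rj)); last first.
  by apply: div_mono; [lra | apply: exprn_gt0; lra | exact: hpos].
rewrite ler_pdivlMr //.
rewrite hnj hX /homcoord /= hl (hX (Ordinal hlk1)) /= eqxx divr1.
have hcz : coord (sq ((n0 + j)%N).+1) l != 0 by rewrite -nr_eq0 -/rj1; lra.
have hF : (false%:R : C) = 0 by [].
have hcr := mulr_ge0 c0 (ltW hrj1).
case: (ltnP i k) => hik.
  case: (eqVneq (i : nat) l) => hil.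
    rewrite hil divff // subrr nr0 mul0r; lra.
  rewrite hF subr0 nr_div -/rj1.
  rewrite mulrAC ler_pdivrMr //.
  have := hrat j i hik hil; rewrite -/rj -/rj1.
  lra.
have hi : (i : nat) = k by have := ltn_ord i; nlia.
rewrite hi.
have -> : (k == l) = false by apply/eqP; nlia.
rewrite hF subr0 nr_div nr1 -/rj1 mul1r mulrC ler_pdivrMr //.
have := hgrow j; rewrite -/rj -/rj1; lra.
Qed.

Lemma escape_fwd (l : nat) (hl : (l < k)%N) (R0 : R) (sq : nat -> 'I_k -> C)
    (X : 'I_k.+1 -> C) (A : ('I_k -> C) -> Prop) :
  0 <= R0 ->
  (forall i, X i = ((i : nat) == l)%:R) ->
  (forall x, Dom l R0 x -> A x) ->
  proj_cvg (fun n => homcoord (sq n)) X ->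
  exists n, (0 < n)%N /\ interior_Ck A (sq n).
Proof.
move=> hR0 hX hA [j [hXj [[N1 hN1] hcv]]].
have jl : (j : nat) = l.
  case: (eqVneq (j : nat) l) => // hne.
  by move: hXj; rewrite hX (negbTE hne) eqxx.
have K0 : 0 <= K by rewrite ler0n.
set D := 2 * K + 2 + R0.
have D0 : 0 < D by rewrite /D; lra.
have e10 : 0 < D^-1 by rewrite invr_gt0.
have [N2 hN2] := uniformN (fun i => hcv i _ e10).
set n := maxn (maxn N1 N2) 1.
have hn1 : (N1 <= n)%N by rewrite /n; nlia.
have hn2 : (N2 <= n)%N by rewrite /n; nlia.
exists n; split; first by rewrite /n; nlia.
set x := sq n.
have hXj1 : X j = 1 by rewrite hX jl eqxx.
have hxj : homcoord x j = coord x l by rewrite /homcoord jl hl.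
have hxl : coord x l != 0 by rewrite -hxj; exact: hN1.
set rho := nr (coord x l).
have hr0 : 0 < rho by rewrite lt0r nr_eq0 hxl nr_ge0.
have hkk : (k < k.+1)%N by [].
have hD : D < rho.
  have := hN2 (Ordinal hkk) n hn2.
  rewrite hxj hXj1 divr1 hX /homcoord /= ltnn.
  have -> : (k == l) = false by apply/eqP; nlia.
  rewrite subr0 ltC_nr nr_div nr1 mul1r.
  by rewrite ltf_pV2 // posrE.
have hm : forall m, (m < k)%N -> m != l -> nr (coord x m) < D^-1 * rho.
  move=> m hmk hml; have hmk1 : (m < k.+1)%N by nlia.
  have := hN2 (Ordinal hmk1) n hn2.
  rewrite hxj hXj1 divr1 hX /homcoord /= hmk (negbTE hml) subr0 ltC_nr nr_div -/rho.
  by rewrite ltr_pdivrMr.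
exists 1; split; first lra.
move=> w hw; apply: hA.
have hwm : forall m, (m < k)%N -> nr (coord w m - coord x m) < 1.
  by move=> m hmk; rewrite !(coord_lt _ hmk) -ltC_nr; apply: hw.
have hwl : rho - 1 <= nr (coord w l).
  have -> : coord w l = coord x l + (coord w l - coord x l) by rewrite addrC subrK.
  have := nrB (coord x l) (coord w l - coord x l); have := hwm l hl; rewrite -/rho; lra.
have hDr : D * (D^-1 * rho) = rho by rewrite mulrA divff ?mul1r //; lra.
split; first by rewrite /D in hD; lra.
move=> m hmk hml.
have h1 : nr (coord w m) <= nr (coord x m) + 1.
  have -> : coord w m = coord x m + (coord w m - coord x m) by rewrite addrC subrK.
  have := nrD (coord x m) (coord w m - coord x m); have := hwm m hmk; lra.
have h2 := hm m hmk hml.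
set t := D^-1 * rho in h2 hDr.
have h3 : K * nr (coord w m) <= K * (t + 1).
  by apply: ler_wpM2l => //; lra.
have h4 : 2 * K * t <= rho.
  rewrite -hDr /D; have : 0 <= t by apply: mulr_ge0; lra.
  move=> t0; have : 0 <= (2 + R0) * t by apply: mulr_ge0; lra.
  lra.
rewrite /D in hD; lra.
Qed.
End Esc.

Section Conv.
Variable R : realType.
Local Notation C := (R[i]).
Variable k : nat.
Hypothesis hk : (3 <= k)%N.

Lemma Vk_Dom (R0 : R) (x : 'I_k -> C) : V_k R0 x <-> Dom k.-1 R0 x.
Proof.
rewrite /V_k /Dom; split=> [[hV hR]|[hR hV]]; split.
- by move: hR; rewrite nrE lecR.
- by move=> m hm hml; rewrite -leCK; apply: hV; nlia.
- by move=> m hm; rewrite leCK; apply: hV; nlia.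
- by rewrite nrE lecR.
Qed.

Lemma Vm_Dom (R0 : R) (x : 'I_k -> C) : V_minus R0 x <-> Dom 0 R0 x.
Proof.
rewrite /V_minus /Dom; split=> [[hV hR]|[hR hV]]; split.
- by move: hR; rewrite nrE lecR.
- by move=> m hm hml; rewrite -leCK; apply: hV; nlia.
- by move=> m /andP [hm0 hm]; rewrite leCK; apply: hV; nlia.
- by rewrite nrE lecR.
Qed.
End Conv.

Unset Implicit Arguments.

Theorem lemma3p3 (R : realType) (k dt d : nat) (mt Mt : R)
  (a : nat -> R[i]) (p : nat -> {mpoly R[i][k.-1]})
  (Sinv : nat -> ('I_k -> R[i]) -> ('I_k -> R[i])) :
  (3 <= k)%N -> (1 <= dt)%N -> (dt.+2 <= d)%N ->
  0 < mt -> 0 < Mt ->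
  (forall n, (0 < n)%N -> mt%:C < `|a n| < Mt%:C) ->
  (forall n, (0 < n)%N -> forall m, `|(p n)@_m| < Mt%:C) ->
  (forall n, (0 < n)%N -> mdegree (shift_last_poly (a n) (p n)) = dt) ->
  (forall n, (0 < n)%N -> forall z,
      Sinv n (weak_shift d (a n) (p n) z) = z /\
      weak_shift d (a n) (p n) (Sinv n z) = z) ->
  exists Rad : R, 1 < Rad /\
    (forall z : 'I_k -> R[i],
       proj_cvg (fun n => homcoord (iter_comp (fun n => weak_shift d (a n) (p n)) n z))
                (@Xplus R k)
       <-> exists n, (0 < n)%N /\
             interior_Ck (V_k Rad)
               (iter_comp (fun n => weak_shift d (a n) (p n)) n z)) /\
    (forall z : 'I_k -> R[i],
       proj_cvg (fun n => homcoord (iter_comp Sinv n z)) (@Xminus R k)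
       <-> exists n, (0 < n)%N /\
             interior_Ck (V_minus Rad) (iter_comp Sinv n z)).
Proof.
move=> hk hdt hd hmt hMt ha hp hdeg hinv.
have ha' : forall n, (0 < n)%N -> nr (a n) <= Mt.
  by move=> n /ha /andP [_]; rewrite ltC_nr => /ltW.
have hp' : forall n, (0 < n)%N -> forall m, nr (p n)@_m <= Mt.
  by move=> n /hp h m; have := h m; rewrite ltC_nr => /ltW.
have hs' : forall n, (0 < n)%N -> (msize (p n) <= dt.+1)%N.
  by move=> n hn; apply: (msize_p (a := a n) hdt); apply: hdeg.
set K := ((k.-1)%:R : R).
have K2 : 2 <= K by rewrite /K -[2]/(2%:R) ler_nat; nlia.
set B := Bc k dt Mt.
have B0 : 0 <= B by rewrite /B /Bc mulr_ge0 ?ler0n //; lra.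
have MK0 : 0 <= Mt * K by apply: mulr_ge0; lra.
set R0 := 2 + 8 * K + 2 * Mt * K + 4 * (1 + Mt + B).
have h1 : 1 <= R0 by rewrite /R0; lra.
have h2 : 2 <= R0 by rewrite /R0; lra.
have h8 : 8 * K <= R0 by rewrite /R0; lra.
have hMK : 2 * Mt * K <= R0 by rewrite /R0; lra.
have hsq : R0 <= R0 ^+ 2.
  rewrite expr2; have : R0 * 1 <= R0 * R0 by apply: ler_wpM2l; lra.
  lra.
have h4a : 4 * (Mt + B) <= R0 ^+ 2 by rewrite /R0 in hsq *; lra.
have h4b : 4 * (1 + B) <= R0 ^+ 2 by rewrite /R0 in hsq *; lra.
have hlk : (k.-1 < k)%N by nlia.
have h0k : (0 < k)%N by nlia.
exists R0; split; first by rewrite /R0; lra.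
split.
- move=> z.
  set F := (fun n => weak_shift d (a n) (p n)).
  have hstep : forall n, (0 < n)%N -> Dom k.-1 R0 (iter_comp F n z) ->
     Dom k.-1 R0 (iter_comp F n.+1 z) /\
     2 * nr (coord (iter_comp F n z) k.-1) <= nr (coord (iter_comp F n.+1 z) k.-1) /\
     forall m, (m < k)%N -> m != k.-1 ->
       nr (coord (iter_comp F n.+1 z) m) * nr (coord (iter_comp F n z) k.-1) <=
       8 * nr (coord (iter_comp F n.+1 z) k.-1).
    move=> n n0 [hR hV].
    have hV' : forall m, (m < k.-1)%N -> K * nr (coord (iter_comp F n z) m) <=
                 nr (coord (iter_comp F n z) k.-1).
      by move=> m hm; apply: hV; nlia.
    have hn1 : (0 < n.+1)%N by [].
    have := fwd_step hk hdt hd (ha' _ hn1) (hp' _ hn1) (hs' _ hn1) h1 h8 h4a hR hV'.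
    move=> [A1 [A2 A3]].
    have -> : iter_comp F n.+1 z = weak_shift d (a n.+1) (p n.+1) (iter_comp F n z) by [].
    split; [split | split => //].
    + have := nr_ge0 (coord (iter_comp F n z) k.-1); lra.
    + by move=> m hm hml; apply: A1; nlia.
    + by move=> m hm hml; apply: A3; nlia.
  split => H.
    apply: (escape_fwd hlk (R0 := R0)) H => //; first lra.
    by move=> x /(Vk_Dom hk).
  apply: (escape_back hlk (R0 := R0) (c := 8)) H => //; try lra.
  by move=> x /(Vk_Dom hk).
- move=> z.
  have hstep : forall n, (0 < n)%N -> Dom 0 R0 (iter_comp Sinv n z) ->
     Dom 0 R0 (iter_comp Sinv n.+1 z) /\
     2 * nr (coord (iter_comp Sinv n z) 0) <= nr (coord (iter_comp Sinv n.+1 z) 0) /\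
     forall m, (m < k)%N -> m != 0%N ->
       nr (coord (iter_comp Sinv n.+1 z) m) * nr (coord (iter_comp Sinv n z) 0) <=
       2 * Mt * nr (coord (iter_comp Sinv n.+1 z) 0).
    move=> n n0 [hR hV].
    have hV' : forall m, (0 < m < k)%N -> K * nr (coord (iter_comp Sinv n z) m) <=
                 nr (coord (iter_comp Sinv n z) 0).
      by move=> m /andP [hm0 hm]; apply: hV; nlia.
    have hn1 : (0 < n.+1)%N by [].
    have hW : weak_shift d (a n.+1) (p n.+1) (iter_comp Sinv n.+1 z) = iter_comp Sinv n z.
      by have [_ ->] := hinv n.+1 hn1 (iter_comp Sinv n z).
    have := bwd_step hk hdt hd (ha' _ hn1) (hp' _ hn1) (hs' _ hn1) hMt h2 h8 hMK h4b hW hR hV'.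
    move=> [A1 [A2 A3]].
    split; [split | split => //].
    + have := nr_ge0 (coord (iter_comp Sinv n z) 0); lra.
    + by move=> m hm hml; apply: A1; nlia.
    + by move=> m hm hml; apply: A3; nlia.
  split => H.
    apply: (escape_fwd h0k (R0 := R0)) H => //; first lra.
    by move=> x /(Vm_Dom hk).
  apply: (escape_back h0k (R0 := R0) (c := 2 * Mt)) H => //; try lra.
  by move=> x /(Vm_Dom hk).
Qed.
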